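(* Let $C=6\pi/\sqrt2$. There is $\Gamma_0>0$ such that for all $\Gamma\in(0,\Gamma_0)$ the following holds. Let $\mathbb L\subset\mathbb Z^3$ be a lattice plaquette (unit square) and let $\theta_{\boldsymbol r'}$, $\boldsymbol r'\in\mathbb L$, be angles such that $|S^{(\gamma)}_{\boldsymbol r'}-S^{(\gamma)}_{\boldsymbol r''}|<\Gamma$ for each of the four bonds $(\boldsymbol r',\boldsymbol r'')$ of $\mathbb L$, with $\gamma$ the direction of that bond. Then for any $\boldsymbol r\in\mathbb L$, either all $\theta_{\boldsymbol r'}$, $\boldsymbol r'\in\mathbb L$, are within $C\sqrt\Gamma$ of $\theta_{\boldsymbol r}$, or there is a direction $\alpha$ among the two spanning $\mathbb L$ such that the neighbour $\boldsymbol r'$ of $\boldsymbol r$ with $\boldsymbol r'-\boldsymbol r\perp\hat{\mathrm e}_\alpha$ has $\theta_{\boldsymbol r'}$ within $C\sqrt\Gamma$ of $\theta_{\boldsymbol r}$ while the other two sites of $\mathbb L$ have angles within $C\sqrt\Gamma$ of $2\phi_\alpha-\theta_{\boldsymbol r}$ (the reflection of $\theta_{\boldsymbol r}$ through the $\alpha$-th of $\hat{\mathrm a},\hat{\mathrm b},\hat{\mathrm c}$). Angular distances are mod $2\pi$.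
   Context: $\boldsymbol S_{\boldsymbol r}=(\cos\theta_{\boldsymbol r},\sin\theta_{\boldsymbol r})$; $\hat{\mathrm a},\hat{\mathrm b},\hat{\mathrm c}$ are the unit vectors at angles $\phi_1=0,\phi_2=\tfrac{2\pi}3,\phi_3=-\tfrac{2\pi}3$ associated with lattice directions $\hat{\mathrm e}_1,\hat{\mathrm e}_2,\hat{\mathrm e}_3$, and $S^{(\gamma)}_{\boldsymbol r}=\cos(\theta_{\boldsymbol r}-\phi_\gamma)$. *)

(* Defs.v *)
From Stdlib Require Export Reals ZArith.
Open Scope R_scope.

Inductive dir : Set := D1 | D2 | D3.

Definition site : Set := (Z * Z * Z)%type.

Definition evec (g : dir) : site :=
  match g with
  | D1 => (1, 0, 0)%Z
  | D2 => (0, 1, 0)%Z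
  | D3 => (0, 0, 1)%Z
  end.

Definition vadd (u v : site) : site :=
  let '(a1, a2, a3) := u in let '(b1, b2, b3) := v in
  ((a1 + b1)%Z, (a2 + b2)%Z, (a3 + b3)%Z).

Definition vsub (u v : site) : site :=
  let '(a1, a2, a3) := u in let '(b1, b2, b3) := v in
  ((a1 - b1)%Z, (a2 - b2)%Z, (a3 - b3)%Z).

Definition dotZ (u v : site) : Z :=
  let '(a1, a2, a3) := u in let '(b1, b2, b3) := v in
  (a1 * b1 + a2 * b2 + a3 * b3)%Z.

Definition phi (g : dir) : R :=
  match g with
  | D1 => 0
  | D2 => 2 * PI / 3
  | D3 => - (2 * PI / 3)
  end.

Definition Sg (g : dir) (th : R) : R := cos (th - phi g).

Definition ang_within (t u d : R) : Prop :=
  exists k : Z, Rabs (t - u - 2 * PI * IZR k) <= d.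

Definition in_plaq (x : site) (a b : dir) (r : site) : Prop :=
  r = x \/ r = vadd x (evec a) \/ r = vadd x (evec b)
  \/ r = vadd (vadd x (evec a)) (evec b).

Definition plaq_bond_hyp (G : R) (x : site) (a b : dir) (th : site -> R) : Prop :=
  let xa := vadd x (evec a) in
  let xb := vadd x (evec b) in
  let xab := vadd xa (evec b) in
  Rabs (Sg a (th x) - Sg a (th xa)) < G /\
  Rabs (Sg a (th xb) - Sg a (th xab)) < G /\
  Rabs (Sg b (th x) - Sg b (th xb)) < G /\
  Rabs (Sg b (th xa) - Sg b (th xab)) < G.

Definition Cconst : R := 6 * PI / sqrt 2.

(* Main.v *)
Require Import Defs.
From Stdlib Require Import Reals Lra Lia ZArith.
Open Scope R_scope.

Definition near := ang_within.

Lemma Rabs_le_inv' x d : Rabs x <= d -> -d <= x <= d.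
Proof. unfold Rabs; destruct Rcase_abs; lra. Qed.

Lemma nt t u v d1 d2 : near t u d1 -> near u v d2 -> near t v (d1 + d2).
Proof.
  intros [k1 H1] [k2 H2]; exists (k1 + k2)%Z; rewrite plus_IZR.
  apply Rabs_le_inv' in H1; apply Rabs_le_inv' in H2; apply Rabs_le; lra.
Qed.

Lemma ns t u d : near t u d -> near u t d.
Proof.
  intros [k H]; exists (- k)%Z; rewrite opp_IZR.
  apply Rabs_le_inv' in H; apply Rabs_le; lra.
Qed.

Lemma nr c t u d : near t u d -> near (c - t) (c - u) d.
Proof.
  intros [k H]; exists (- k)%Z; rewrite opp_IZR.
  apply Rabs_le_inv' in H; apply Rabs_le; lra.
Qed.

Lemma ne t u d t' u' d' : near t u d -> t = t' -> u = u' -> d <= d' -> near t' u' d'.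
Proof.
  intros [k H] <- <- Hd; exists k. apply Rabs_le_inv' in H; apply Rabs_le; lra.
Qed.

Lemma nrefl t d : 0 <= d -> near t t d.
Proof. intros; exists 0%Z. replace (t - t - 2 * PI * IZR 0) with 0 by (simpl; ring).
  rewrite Rabs_R0; lra. Qed.

Lemma phi_diff a b : a <> b -> exists m : Z,
  phi a - phi b = 2 * PI / 3 * IZR m /\ (m = 1 \/ m = -1 \/ m = 2 \/ m = -2)%Z.
Proof.
  intros H; destruct a, b; try congruence; simpl phi;
  [exists (-1)%Z | exists 1%Z | exists 1%Z | exists 2%Z | exists (-1)%Z | exists (-2)%Z];
  (split; [simpl; field | lia]).
Qed.

Lemma no_near a b t u d : a <> b -> d < 2 * PI / 3 ->
  (t - u = 2 * (phi a - phi b) \/ t - u = 4 * (phi a - phi b)) -> ~ near t u d.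
Proof.
  intros Hab Hd Htu [k Hk]. apply Rabs_le_inv' in Hk.
  destruct (phi_diff a b Hab) as [m [Hm Hm']].
  assert (HP := PI_RGT_0).
  destruct Htu as [Htu|Htu]; rewrite Hm in Htu.
  - assert (Hz : (2 * m - 3 * k <> 0)%Z) by lia.
    assert (E : t - u - 2 * PI * IZR k = 2 * PI / 3 * IZR (2 * m - 3 * k)).
    { rewrite minus_IZR, !mult_IZR; simpl IZR. lra. }
    destruct (Z_lt_le_dec (2 * m - 3 * k) 0) as [Hl|Hl].
    + assert (IZR (2 * m - 3 * k) <= -1) by (apply IZR_le; lia). nra.
    + assert (1 <= IZR (2 * m - 3 * k)) by (apply IZR_le; lia). nra.
  - assert (Hz : (4 * m - 3 * k <> 0)%Z) by lia.
    assert (E : t - u - 2 * PI * IZR k = 2 * PI / 3 * IZR (4 * m - 3 * k)).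
    { rewrite minus_IZR, !mult_IZR; simpl IZR. lra. }
    destruct (Z_lt_le_dec (4 * m - 3 * k) 0) as [Hl|Hl].
    + assert (IZR (4 * m - 3 * k) <= -1) by (apply IZR_le; lia). nra.
    + assert (1 <= IZR (4 * m - 3 * k)) by (apply IZR_le; lia). nra.
Qed.

Definition rel (g : dir) (u v : R) (e : R) := near v u e \/ near v (2 * phi g - u) e.

Lemma core a b e th r1 r2 r3 : a <> b -> 0 <= e -> 4 * e < 2 * PI / 3 ->
  rel a th r1 e -> rel b th r2 e -> rel b r1 r3 e -> rel a r2 r3 e ->
  (near r1 th (5*e) /\ near r2 th (5*e) /\ near r3 th (5*e)) \/
  (near r1 th (5*e) /\ near r2 (2 * phi b - th) (5*e) /\ near r3 (2 * phi b - th) (5*e)) \/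
  (near r2 th (5*e) /\ near r1 (2 * phi a - th) (5*e) /\ near r3 (2 * phi a - th) (5*e)).
Proof.
  intros Hab He Hs H1 H2 H3 H4.
  assert (Hba : b <> a) by congruence.
  assert (m1 : forall t u, near t u e -> near t u (5*e)) by (intros; eapply ne; eauto; lra).
  assert (m2 : forall t u, near t u (e+e) -> near t u (5*e)) by (intros; eapply ne; eauto; lra).
  destruct H1 as [H1|H1], H2 as [H2|H2].
  -
    destruct H3 as [H3|H3].
    + left; repeat split; auto. apply m2; eapply nt; [exact H3|exact H1].
    + destruct H4 as [H4|H4].
      * left; repeat split; auto. apply m2; eapply nt; [exact H4|exact H2].
      * exfalso.
        assert (A1 : near r3 (2 * phi b - th) (e + e)) by (eapply nt; [exact H3| apply nr; exact H1]).
        assert (A2 : near r3 (2 * phi a - th) (e + e)) by (eapply nt; [exact H4| apply nr; exact H2]).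
        apply (no_near b a (2 * phi b - th) (2 * phi a - th) ((e+e)+(e+e))); [auto|lra|left; ring|].
        eapply nt; [apply ns; exact A1| exact A2].
  -
    right; left.
    destruct H3 as [H3|H3].
    + destruct H4 as [H4|H4].
      * repeat split; auto. apply m2; eapply nt; [exact H4|exact H2].
      * exfalso.
        assert (A1 : near r3 th (e + e)) by (eapply nt; [exact H3|exact H1]).
        assert (A2 : near r3 (2 * phi a - (2 * phi b - th)) (e + e)) by (eapply nt; [exact H4| apply nr; exact H2]).
        apply (no_near b a th (2 * phi a - (2 * phi b - th)) ((e+e)+(e+e))); [auto|lra|left; ring|].
        eapply nt; [apply ns; exact A1| exact A2].
    + repeat split; auto. apply m2; eapply nt; [exact H3| apply nr; exact H1].
  -
    right; right.
    destruct H4 as [H4|H4].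
    + destruct H3 as [H3|H3].
      * repeat split; auto. apply m2; eapply nt; [exact H3|exact H1].
      * exfalso.
        assert (A1 : near r3 th (e + e)) by (eapply nt; [exact H4|exact H2]).
        assert (A2 : near r3 (2 * phi b - (2 * phi a - th)) (e + e)) by (eapply nt; [exact H3| apply nr; exact H1]).
        apply (no_near a b th (2 * phi b - (2 * phi a - th)) ((e+e)+(e+e))); [auto|lra|left; ring|].
        eapply nt; [apply ns; exact A1| exact A2].
    + repeat split; auto. apply m2; eapply nt; [exact H4| apply nr; exact H2].
  -
    destruct H3 as [H3|H3], H4 as [H4|H4].
    + exfalso.
      assert (A1 : near r3 (2 * phi a - th) (e + e)) by (eapply nt; [exact H3|exact H1]).
      assert (A2 : near r3 (2 * phi b - th) (e + e)) by (eapply nt; [exact H4|exact H2]).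
      apply (no_near a b (2 * phi a - th) (2 * phi b - th) ((e+e)+(e+e))); [auto|lra|left; ring|].
      eapply nt; [apply ns; exact A1| exact A2].
    +
      right; right.
      assert (A1 : near r3 (2 * phi a - th) (e + e)) by (eapply nt; [exact H3|exact H1]).
      assert (A2 : near r3 (2 * phi a - (2 * phi b - th)) (e + e)) by (eapply nt; [exact H4| apply nr; exact H2]).
      assert (A3 : near (2 * phi a - th) (2 * phi a - (2 * phi b - th)) ((e+e)+(e+e))) by (eapply nt; [apply ns; exact A1| exact A2]).
      assert (A4 := nr (2 * phi a) _ _ _ A3).
      repeat split; auto.
      * assert (A5 : near (2 * phi b - th) th (4*e)) by (eapply ne; [apply ns; exact A4|ring|ring|lra]).
        eapply ne; [eapply nt; [exact H2| exact A5]|ring|ring|lra].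
    +
      right; left.
      assert (A1 : near r3 (2 * phi b - th) (e + e)) by (eapply nt; [exact H4|exact H2]).
      assert (A2 : near r3 (2 * phi b - (2 * phi a - th)) (e + e)) by (eapply nt; [exact H3| apply nr; exact H1]).
      assert (A3 : near (2 * phi b - th) (2 * phi b - (2 * phi a - th)) ((e+e)+(e+e))) by (eapply nt; [apply ns; exact A1| exact A2]).
      assert (A4 := nr (2 * phi b) _ _ _ A3).
      repeat split; auto.
      * assert (A5 : near (2 * phi a - th) th (4*e)) by (eapply ne; [apply ns; exact A4|ring|ring|lra]).
        eapply ne; [eapply nt; [exact H1| exact A5]|ring|ring|lra].
    + exfalso.
      assert (A1 : near r3 (2 * phi b - (2 * phi a - th)) (e + e)) by (eapply nt; [exact H3| apply nr; exact H1]).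
      assert (A2 : near r3 (2 * phi a - (2 * phi b - th)) (e + e)) by (eapply nt; [exact H4| apply nr; exact H2]).
      apply (no_near b a (2 * phi b - (2 * phi a - th)) (2 * phi a - (2 * phi b - th)) ((e+e)+(e+e))); [auto|lra|right; ring|].
      eapply nt; [apply ns; exact A1| exact A2].
Qed.

Lemma sin_shift_nat x n : Rabs (sin (x + INR n * PI)) = Rabs (sin x).
Proof.
  induction n as [|n IH].
  - simpl. rewrite Rmult_0_l, Rplus_0_r; reflexivity.
  - rewrite S_INR. replace (x + (INR n + 1) * PI) with ((x + INR n * PI) + PI) by ring.
    rewrite neg_sin, Rabs_Ropp; exact IH.
Qed.

Lemma sin_shift x k : Rabs (sin (x - IZR k * PI)) = Rabs (sin x).
Proof.
  destruct (Z_le_gt_dec 0 k) as [Hk|Hk].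
  - rewrite <- (Z2Nat.id k Hk), <- INR_IZR_INZ.
    rewrite <- (sin_shift_nat (x - INR (Z.to_nat k) * PI) (Z.to_nat k)).
    f_equal; f_equal; ring.
  - replace k with (- Z.of_nat (Z.to_nat (- k)))%Z by lia.
    rewrite opp_IZR, <- INR_IZR_INZ.
    replace (x - - INR (Z.to_nat (- k)) * PI) with (x + INR (Z.to_nat (-k)) * PI) by ring.
    apply sin_shift_nat.
Qed.

Lemma sin_lb y : 0 <= y <= PI -> y - y^3/6 <= sin y.
Proof.
  intros H. destruct (sin_bound y 0 (proj1 H) (proj2 H)) as [H1 _].
  replace (sin_approx y (2 * 0 + 1)) with (y - y^3/6) in H1 by
    (unfold sin_approx, sin_term; simpl; field). exact H1.
Qed.

Lemma abs_sin_abs z : Rabs z <= PI -> Rabs (sin z) = sin (Rabs z).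
Proof.
  intros H. destruct (Rle_dec 0 z) as [Hz|Hz].
  - rewrite (Rabs_right z) in * by lra. apply Rabs_right.
    apply Rle_ge, sin_ge_0; lra.
  - rewrite (Rabs_left z) in * by lra. rewrite sin_neg.
    rewrite Rabs_left1; [reflexivity|].
    assert (0 <= sin (- z)) by (apply sin_ge_0; lra). rewrite sin_neg in H0; lra.
Qed.

Lemma sin_small A s : 0 <= s <= 1/10 -> Rabs (sin A) < s ->
  exists k : Z, Rabs (A - IZR k * PI) <= 6/5 * s.
Proof.
  intros Hs HA. assert (HP := PI_RGT_0). assert (HP4 := PI_4).
  remember (A / PI + 1/2) as w eqn:Hwdef.
  destruct (archimed w) as [Hw1 Hw2].
  exists (up w - 1)%Z. rewrite minus_IZR. simpl IZR.
  remember (A - (IZR (up w) - 1) * PI) as A' eqn:HA'def.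
  assert (HA' : Rabs A' <= PI / 2).
  { apply Rabs_le. assert (A = (w - 1/2) * PI) by (rewrite Hwdef; field; apply PI_neq0).
    rewrite HA'def, H.
    replace ((w - 1 / 2) * PI - (IZR (up w) - 1) * PI) with ((w + 1/2 - IZR (up w)) * PI) by field.
    assert (0 <= (w + 1/2 - IZR (up w) + 1/2) * PI) by (apply Rmult_le_pos; lra).
    assert (0 <= (1/2 - (w + 1/2 - IZR (up w))) * PI) by (apply Rmult_le_pos; lra).
    split; nra. }
  assert (Hsin : Rabs (sin A') = Rabs (sin A)).
  { rewrite HA'def. replace (IZR (up w) - 1) with (IZR (up w - 1)) by (rewrite minus_IZR; reflexivity).
    apply sin_shift. }
  rewrite abs_sin_abs in Hsin by lra.
  set (y := Rabs A') in *.
  assert (Hy0 : 0 <= y) by apply Rabs_pos.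
  assert (HyP : y <= PI) by lra. assert (Hlb := sin_lb y (conj Hy0 HyP)).
  assert (Hy2 : y <= 2) by lra.
  assert (y / 3 <= y - y^3/6) by nra.
  assert (y < 3 * s) by lra.
  assert (y * y <= 1) by nra.
  assert (y - y^3/6 >= 5/6 * y) by nra.
  lra.
Qed.

Lemma bond g t t' s : 0 < s <= 1/10 ->
  Rabs (Sg g t - Sg g t') < 2 * s^2 ->
  near t' t (12/5 * s) \/ near t' (2 * phi g - t) (12/5 * s).
Proof.
  intros Hs H. unfold Sg in H. rewrite form2 in H.
  set (X := sin ((t - phi g - (t' - phi g)) / 2)) in H.
  set (Y := sin ((t - phi g + (t' - phi g)) / 2)) in H.
  rewrite !Rabs_mult in H. replace (Rabs (-2)) with 2 in H by (rewrite Rabs_left; lra).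
  assert (Hc : Rabs X < s \/ Rabs Y < s).
  { destruct (Rlt_le_dec (Rabs X) s) as [h|h]; [now left|].
    destruct (Rlt_le_dec (Rabs Y) s) as [h'|h']; [now right|].
    exfalso. assert (s * s <= Rabs X * Rabs Y) by (apply Rmult_le_compat; lra). nra. }
  destruct Hc as [Hc|Hc].
  - left. destruct (sin_small _ s ltac:(lra) Hc) as [k Hk].
    exists (- k)%Z. rewrite opp_IZR. apply Rabs_le_inv' in Hk. apply Rabs_le. lra.
  - right. destruct (sin_small _ s ltac:(lra) Hc) as [k Hk].
    exists k. apply Rabs_le_inv' in Hk. apply Rabs_le. lra.
Qed.

Definition q (x : site) (a b : dir) (i j : bool) : site :=
  match i, j with
  | false, false => x
  | true, false => vadd x (evec a)
  | false, true => vadd x (evec b)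
  | true, true => vadd (vadd x (evec a)) (evec b)
  end.

Lemma plaq_q x a b r : in_plaq x a b r -> exists i j, r = q x a b i j.
Proof.
  intros [H|[H|[H|H]]]; [exists false, false|exists true, false|exists false, true|exists true, true]; exact H.
Qed.

Lemma dot_a x a b i j i' j' : a <> b ->
  dotZ (vsub (q x a b i' j') (q x a b i j)) (evec a) = (Z.b2z i' - Z.b2z i)%Z.
Proof.
  intros H; destruct x as [[x1 x2] x3]; destruct a, b; try congruence;
  destruct i, j, i', j'; simpl; lia.
Qed.

Lemma dot_b x a b i j i' j' : a <> b ->
  dotZ (vsub (q x a b i' j') (q x a b i j)) (evec b) = (Z.b2z j' - Z.b2z j)%Z.
Proof.
  intros H; destruct x as [[x1 x2] x3]; destruct a, b; try congruence;
  destruct i, j, i', j'; simpl; lia.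
Qed.

Lemma nm t u d d' : near t u d -> d <= d' -> near t u d'.
Proof. intros; eapply ne; eauto. Qed.

Theorem lemma6p7 :
  exists G0 : R, 0 < G0 /\
  forall G : R, 0 < G < G0 ->
  forall (x : site) (a b : dir), a <> b ->
  forall th : site -> R,
  plaq_bond_hyp G x a b th ->
  forall r : site, in_plaq x a b r ->
    (forall r', in_plaq x a b r' -> ang_within (th r') (th r) (Cconst * sqrt G))
    \/
    (exists al : dir, (al = a \/ al = b) /\
       forall r', in_plaq x a b r' ->
         (dotZ (vsub r' r) (evec al) = 0%Z ->
            ang_within (th r') (th r) (Cconst * sqrt G)) /\
         (dotZ (vsub r' r) (evec al) <> 0%Z ->
            ang_within (th r') (2 * phi al - th r) (Cconst * sqrt G))).
Proof.
  exists (1/100). split; [lra|].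
  intros G [HG0 HG1] x a b Hab th Hbond r Hr.
  assert (HP := PI_RGT_0). assert (HP3 := PI2_3_2).
  assert (Hsq2 : sqrt 2 * sqrt 2 = 2) by (apply sqrt_sqrt; lra).
  assert (HsqG : sqrt G * sqrt G = G) by (apply sqrt_sqrt; lra).
  assert (Hs2p : 0 <= sqrt 2) by apply sqrt_pos.
  assert (HsGp : 0 <= sqrt G) by apply sqrt_pos.
  assert (Hs21 : 1 < sqrt 2) by nra.
  assert (HsG1 : sqrt G < 1/10) by nra.
  set (s := sqrt G / sqrt 2).
  assert (Hss : s * sqrt 2 = sqrt G) by (unfold s; field; lra).
  assert (Hs0 : 0 < s).
  { assert (0 < sqrt G) by (apply sqrt_lt_R0; lra). nra. }
  assert (Hs1 : s <= 1/10) by nra.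
  assert (HG : 2 * s ^ 2 = G).
  { rewrite <- HsqG, <- Hss.
    replace (s * sqrt 2 * (s * sqrt 2)) with (s * s * (sqrt 2 * sqrt 2)) by ring.
    rewrite Hsq2. ring. }
  assert (HC : Cconst * sqrt G = 6 * PI * s) by (unfold Cconst, s; field; lra).
  set (E := 12/5 * s).
  assert (HbondE : forall g t t', Rabs (Sg g t - Sg g t') < G -> rel g t t' E).
  { intros g t t' H. apply bond; [lra|]. rewrite HG; exact H. }
  destruct Hbond as [B1 [B2 [B3 B4]]].
  assert (Ha : forall i j, rel a (th (q x a b i j)) (th (q x a b (negb i) j)) E).
  { intros [|] [|]; apply HbondE; simpl; try assumption; rewrite Rabs_minus_sym; assumption. }
  assert (Hb : forall i j, rel b (th (q x a b i j)) (th (q x a b i (negb j))) E).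
  { intros [|] [|]; apply HbondE; simpl; try assumption; rewrite Rabs_minus_sym; assumption. }
  destruct (plaq_q _ _ _ _ Hr) as [i [j ->]].
  assert (He0 : 0 <= E) by (unfold E; lra).
  assert (He4 : 4 * E < 2 * PI / 3) by (unfold E; lra).
  assert (H5 : 5 * E <= Cconst * sqrt G) by (rewrite HC; unfold E; nra).
  assert (HD : 0 <= Cconst * sqrt G) by lra.
  destruct (core a b E (th (q x a b i j)) (th (q x a b (negb i) j)) (th (q x a b i (negb j)))
              (th (q x a b (negb i) (negb j))) Hab He0 He4 (Ha i j) (Hb i j)
              (Hb (negb i) j) (Ha i (negb j)))
    as [[N1 [N2 N3]] | [[N1 [N2 N3]] | [N2 [N1 N3]]]].
  - left. intros r' Hr'. destruct (plaq_q _ _ _ _ Hr') as [i' [j' ->]].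
    change (near (th (q x a b i' j')) (th (q x a b i j)) (Cconst * sqrt G)).
    destruct i, j, i', j'; cbn [negb] in *;
    first [ apply nrefl; lra | eapply nm; [eassumption | lra] ].
  - right. exists b. split; [right; reflexivity|].
    intros r' Hr'. destruct (plaq_q _ _ _ _ Hr') as [i' [j' ->]].
    rewrite dot_b by exact Hab.
    split; intro Hd; [change (near (th (q x a b i' j')) (th (q x a b i j)) (Cconst * sqrt G))
                     |change (near (th (q x a b i' j')) (2 * phi b - th (q x a b i j)) (Cconst * sqrt G))];
    destruct i, j, i', j'; cbv [Z.b2z] in Hd; cbn [negb] in *;
    first [ exfalso; lia | apply nrefl; lra | eapply nm; [eassumption | lra] ].
  - right. exists a. split; [left; reflexivity|].
    intros r' Hr'. destruct (plaq_q _ _ _ _ Hr') as [i' [j' ->]].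
    rewrite dot_a by exact Hab.
    split; intro Hd; [change (near (th (q x a b i' j')) (th (q x a b i j)) (Cconst * sqrt G))
                     |change (near (th (q x a b i' j')) (2 * phi a - th (q x a b i j)) (Cconst * sqrt G))];
    destruct i, j, i', j'; cbv [Z.b2z] in Hd; cbn [negb] in *;
    first [ exfalso; lia | apply nrefl; lra | eapply nm; [eassumption | lra] ].
Qed.
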